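(* For any finite alphabet $\mathfrak{G}$, the pair of graded graphs $(\mathbf{S}_\bullet(\mathfrak{G}), \mathbf{U}, \mathbf{V})$ is $\phi$-diagonal dual, i.e. $\mathbf{V}^\star \mathbf{U} - \mathbf{U} \mathbf{V}^\star = \phi$, for the linear map $\phi : \mathbb{K}\langle\mathbf{S}_\bullet(\mathfrak{G})\rangle \to \mathbb{K}\langle\mathbf{S}_\bullet(\mathfrak{G})\rangle$ satisfying $\phi(\mathfrak{t}) = (\#\mathfrak{G})\, \mathrm{nf}(\mathfrak{t})\, \mathfrak{t}$ for any $\mathfrak{G}$-tree $\mathfrak{t}$.
   Context: $\mathfrak{G}$ is a finite alphabet: a finite set of letters, each letter $\mathtt{a}$ having an arity $|\mathtt{a}|\geq 1$. A $\mathfrak{G}$-tree is either the leaf (the unique tree with no internal node) or $\mathtt{a}[\mathfrak{s}_1,\dots,\mathfrak{s}_{|\mathtt{a}|}]$, a root decorated by $\mathtt{a}\in\mathfrak{G}$ whose children are the $\mathfrak{G}$-trees $\mathfrak{s}_1,\dots,\mathfrak{s}_{|\mathtt{a}|}$. The degree $\deg(\mathfrak{t})$ is the number of internal nodes, the arity $|\mathfrak{t}|$ the number of leaves (ordered from left to right). $\mathbf{S}_\bullet(\mathfrak{G})$ is the set of $\mathfrak{G}$-trees graded by degree. Nodes are addressed by words of positive integers: the root is $\epsilon$ and the $i$-th child of $u$ is $ui$. For $i\in[|\mathfrak{t}|]$, $\mathfrak{t}\circ_i \mathtt{a}$ is obtained by replacing the $i$-th leaf of $\mathfrak{t}$ by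 an internal node decorated by $\mathtt{a}$ with $|\mathtt{a}|$ leaves as children. The linear map $\mathbf{U}$ is defined by $\mathbf{U}(\mathfrak{t}) = \sum_{\mathtt{a}\in\mathfrak{G},\, i\in[|\mathfrak{t}|]} \mathfrak{t}\circ_i \mathtt{a}$. The linear map $\mathbf{V}$ is the adjoint (for the scalar product making $\mathfrak{G}$-trees orthonormal) of the map $\mathbf{V}^\star$ defined recursively by: $\mathbf{V}^\star$ of the leaf is $0$; $\mathbf{V}^\star(\mathtt{a}[\mathfrak{s}, \text{leaf}, \dots, \text{leaf}]) = \mathfrak{s}$; and $\mathbf{V}^\star(\mathtt{a}[\mathfrak{s}_1,\dots,\mathfrak{s}_{|\mathtt{a}|}]) = \sum_{j\in[2,|\mathtt{a}|]} \mathtt{a}[\mathfrak{s}_1,\dots,\mathfrak{s}_{j-1},\mathbf{V}^\star(\mathfrak{s}_j),\mathfrak{s}_{j+1},\dots,\mathfrak{s}_{|\mathtt{a}|}]$ when some $\mathfrak{s}_j$ with $j\geq 2$ is not the leaf. A leaf of $\mathfrak{t}$ is non-first if its address word contains no letter $1$, and $\mathrm{nf}(\mathfrak{t})$ is the number of non-first leaves of $\mathfrak{t}$ (so $\mathrm{nf}$ of the leaf is $1$). *)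

(* Defs.v *)
From mathcomp Require Import all_boot all_algebra.
Set Implicit Arguments. Unset Strict Implicit. Unset Printing Implicit Defensive.
Import GRing.Theory.
Local Open Scope ring_scope.

(* G-trees: [Leaf] is the leaf, [Node a ts] the tree a[ts_1,...,ts_k].
   Well-formedness (k = |a|) is the predicate [wf] below. *)
Inductive tree (G : Type) : Type :=
| Leaf : tree G
| Node : G -> seq (tree G) -> tree G.
Arguments Leaf {G}.

Section Trees.
Variable G : finType.
Variable ar : G -> nat.

Fixpoint wf (t : tree G) : bool :=
  match t with
  | Leaf => true
  | Node a ts => (size ts == ar a) && all wf ts
  end.

Fixpoint tree_eq (t u : tree G) : bool :=
  match t, u with
  | Leaf, Leaf => true
  | Node a ts, Node b us =>
      (a == b) &&
      (fix go (l1 l2 : seq (tree G)) : bool :=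
         match l1, l2 with
         | [::], [::] => true
         | x :: r1, y :: r2 => tree_eq x y && go r1 r2
         | _, _ => false
         end) ts us
  | _, _ => false
  end.

Definition isLeaf (t : tree G) : bool := if t is Leaf then true else false.

Fixpoint leaves (t : tree G) : nat :=
  match t with
  | Leaf => 1
  | Node _ ts => sumn (map leaves ts)
  end.

(* number of non-first leaves: leaves whose address contains no letter 1 *)
Fixpoint nf (t : tree G) : nat :=
  match t with
  | Leaf => 1
  | Node _ [::] => 0
  | Node _ (_ :: ss) => sumn (map nf ss)
  end.

Definition corolla (a : G) : tree G := Node a (nseq (ar a) Leaf).

(* graft t i a = t o_{i+1} a  (leaves indexed from 0 here) *)
Fixpoint graft (t : tree G) (i : nat) (a : G) : tree G :=
  match t with
  | Leaf => if i == 0%N then corolla a else Leaf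
  | Node b ts =>
      Node b ((fix go (l : seq (tree G)) (j : nat) : seq (tree G) :=
                 match l with
                 | [::] => [::]
                 | s :: r => if (j < leaves s)%N then graft s j a :: r
                             else s :: go r (j - leaves s)%N
                 end) ts i)
  end.

Variable K : fieldType.

(* elements of K<S(G)>: finite formal linear combinations of trees *)
Definition vec := seq (K * tree G).

Definition coef (v : vec) (t : tree G) : K :=
  \sum_(p <- v | tree_eq p.2 t) p.1.

Definition lin (f : tree G -> vec) (v : vec) : vec :=
  flatten [seq [seq (p.1 * q.1, q.2) | q <- f p.2] | p <- v].

Definition U (t : tree G) : vec :=
  [seq (1, graft t i a) | a <- enum G, i <- iota 0 (leaves t)].

Fixpoint Vstar (t : tree G) : vec :=
  match t with
  | Leaf => [::]
  | Node _ [::] => [::]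
  | Node a (s :: ss) =>
      if all isLeaf ss then [:: (1, s)]
      else (fix go (pre l : seq (tree G)) : vec :=
              match l with
              | [::] => [::]
              | x :: r =>
                  [seq (q.1, Node a (s :: pre ++ q.2 :: r)) | q <- Vstar x]
                  ++ go (rcons pre x) r
              end) [::] ss
  end.

Definition phi (t : tree G) : vec := [:: ((#|G| * nf t)%:R, t)].

End Trees.

(* Main.v *)
Require Import Defs.
From mathcomp Require Import all_boot all_algebra ring.
Set Implicit Arguments. Unset Strict Implicit. Unset Printing Implicit Defensive.
Import GRing.Theory.
Local Open Scope ring_scope.

Section Aux.
Variable G : finType.
Variable ar : G -> nat.
Variable K : fieldType.

Definition tree_ind2 (P : tree G -> Prop) (hL : P Leaf)
  (hN : forall b ts, foldr (fun x acc => P x /\ acc) True ts -> P (Node b ts)) :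
  forall t, P t :=
  fix F t := match t with
  | Leaf => hL
  | Node b ts => hN b ts ((fix g l := match l return foldr (fun x acc => P x /\ acc) True l with
                                      | [::] => I | x :: r => conj (F x) (g r) end) ts)
  end.

Fixpoint grL (a : G) (l : seq (tree G)) (j : nat) : seq (tree G) :=
  match l with
  | [::] => [::]
  | s :: r => if (j < leaves s)%N then graft ar s j a :: r else s :: grL a r (j - leaves s)%N
  end.

Lemma graft_node b ts i a : graft ar (Node b ts) i a = Node b (grL a ts i).
Proof. by congr Node; elim: ts i => //= s r IH i; case: ifP => // _; rewrite IH. Qed.

Definition Ua a (t : tree G) := [seq graft ar t i a | i <- iota 0 (leaves t)].
Definition DU a (ss : seq (tree G)) := [seq grL a ss i | i <- iota 0 (sumn (map (@leaves G) ss))].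

Lemma Ua_node a b ts : Ua a (Node b ts) = map (Node b) (DU a ts).
Proof. rewrite /Ua /DU /= -map_comp; apply: eq_map => i /=. exact: graft_node. Qed.

Lemma DU_cons a x r : DU a (x :: r) = map (cons^~ r) (Ua a x) ++ map (cons x) (DU a r).
Proof.
rewrite /DU /Ua /= iotaD map_cat add0n; congr (_ ++ _).
  rewrite -map_comp; apply/eq_in_map => i; rewrite mem_iota /= => hi.
  by rewrite hi.
rewrite -(addn0 (leaves x)) iotaDl addn0 -!map_comp; apply: eq_map => i /=.
by rewrite ltnNge leq_addr /= addKn.
Qed.

Lemma DU_nil a : DU a [::] = [::].
Proof. by []. Qed.

Fixpoint DVk (ss : seq (tree G)) : seq (K * seq (tree G)) :=
  match ss with
  | [::] => [::]
  | x :: r => [seq (q.1, q.2 :: r) | q <- Vstar K x] ++ [seq (q.1, x :: q.2) | q <- DVk r]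
  end.

Lemma Vstar_node b s ss : Vstar K (Node b (s :: ss)) =
  if all (@isLeaf G) ss then [:: (1, s)] else [seq (q.1, Node b (s :: q.2)) | q <- DVk ss].
Proof.
rewrite /=; case: ifP => // _.
suff H : forall pre, (fix go (pre l : seq (tree G)) : vec G K :=
              match l with
              | [::] => [::]
              | x :: r =>
                  [seq (q.1, Node b (s :: pre ++ q.2 :: r)) | q <- Vstar K x]
                  ++ go (rcons pre x) r
              end) pre ss = [seq (q.1, Node b (s :: pre ++ q.2)) | q <- DVk ss].
  by rewrite H.
elim: ss => //= x r IH pre; rewrite IH map_cat -!map_comp; congr (_ ++ _).
by apply: eq_map => q /=; rewrite cat_rcons.
Qed.

Lemma Vstar_ones t : all (fun q : K * tree G => q.1 == 1) (Vstar K t).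
Proof.
elim/tree_ind2: t => // b [|s ss] //= [_ IH].
rewrite -/(Vstar K (Node b (s :: ss))) Vstar_node.
case: ifP => _ /=; first by rewrite eqxx.
rewrite all_map.
suff : all (fun q : K * seq (tree G) => q.1 == 1) (DVk ss).
  by apply: sub_all => q.
elim: ss IH {s} => //= x r IHr [Hx Hr].
by rewrite all_cat !all_map IHr // andbT; apply: sub_all Hx => q.
Qed.

Lemma ones_map (T : Type) (v : seq (K * T)) : all (fun q => q.1 == 1) v -> v = map (pair 1) (map snd v).
Proof. by elim: v => //= [[k y] v IH] /andP[/eqP /= -> /IH <-]. Qed.

Definition Vs (t : tree G) := map snd (Vstar K t).
Definition DV (ss : seq (tree G)) := map snd (DVk ss).

Lemma Vstar_Vs t : Vstar K t = map (pair 1) (Vs t).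
Proof. exact/ones_map/Vstar_ones. Qed.

Lemma Vs_node b s ss : Vs (Node b (s :: ss)) =
  if all (@isLeaf G) ss then [:: s] else [seq Node b (s :: l) | l <- DV ss].
Proof. by rewrite /Vs Vstar_node; case: ifP => // _; rewrite /DV -!map_comp. Qed.

Lemma DV_cons x r : DV (x :: r) = map (cons^~ r) (Vs x) ++ map (cons x) (DV r).
Proof. by rewrite /DV /Vs /= map_cat -!map_comp. Qed.

Lemma DV_leaves ss : all (@isLeaf G) ss -> DV ss = [::].
Proof. by elim: ss => // [[|b ts] r IH] //= /IH; rewrite DV_cons /= => ->. Qed.

Lemma Vs_leaf : Vs Leaf = [::]. Proof. by []. Qed.
Lemma Vs_node0 b : Vs (Node b [::]) = [::]. Proof. by []. Qed.

Lemma Vs_corolla a : (0 < ar a)%N -> Vs (corolla ar a) = [:: Leaf].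
Proof.
rewrite /corolla; case: (ar a) => // n _ /=; rewrite -/(Vs (Node a (Leaf :: nseq n Leaf))).
by rewrite Vs_node (_ : all _ (nseq n Leaf) = true) //; elim: n.
Qed.

Lemma Ua_nonleaf a x : all (fun y => ~~ isLeaf y) (Ua a x).
Proof. by case: x => [|b ts] //; rewrite Ua_node all_map; elim: (DU a ts). Qed.

Lemma DU_nonleaf a ss : all (fun l => ~~ all (@isLeaf G) l) (DU a ss).
Proof.
elim: ss => // x r IH; rewrite DU_cons all_cat; apply/andP; split; rewrite all_map.
  by apply: (sub_all _ (Ua_nonleaf a x)) => -[|? ?].
by apply: (sub_all _ IH) => l /=; rewrite andbC => /negbTE ->.
Qed.

Lemma sum_cat (T : Type) (s1 s2 : seq T) (F : T -> K) :
  \sum_(i <- s1 ++ s2) F i = \sum_(i <- s1) F i + \sum_(i <- s2) F i.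
Proof. exact: big_cat. Qed.
Lemma sum_map (T1 T2 : Type) (f : T1 -> T2) (s : seq T1) (F : T2 -> K) :
  \sum_(i <- map f s) F i = \sum_(i <- s) F (f i).
Proof. exact: big_map. Qed.
Lemma sum_seq1 (T : Type) (x : T) (F : T -> K) : \sum_(i <- [:: x]) F i = F x.
Proof. exact: big_seq1. Qed.

Lemma eq_big_all (T : Type) (p : pred T) (s : seq T) (F1 F2 : T -> K) :
  all p s -> (forall y, p y -> F1 y = F2 y) ->
  \sum_(y <- s) F1 y = \sum_(y <- s) F2 y.
Proof.
move=> hs hF; elim: s hs => [|y s IH] /=; first by rewrite !big_nil.
by case/andP=> hy hs; rewrite !big_cons hF // IH.
Qed.

Definition P1 a x := forall h : tree G -> K,
  \sum_(y <- Ua a x) \sum_(z <- Vs y) h z =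
  \sum_(y <- Vs x) \sum_(z <- Ua a y) h z + h x *+ nf x.

Lemma L2 a ss : foldr (fun x acc => P1 a x /\ acc) True ss ->
  forall h : seq (tree G) -> K,
  \sum_(l <- DU a ss) \sum_(m <- DV l) h m =
  \sum_(l <- DV ss) \sum_(m <- DU a l) h m + h ss *+ sumn (map (@nf G) ss).
Proof.
elim: ss => [_ h|x r IH [Hx Hr] h].
  by rewrite DU_nil /DV /= !big_nil add0r mulr0n.
have E1 : \sum_(y <- Ua a x) \sum_(m <- DV (y :: r)) h m =
  \sum_(y <- Ua a x) \sum_(z <- Vs y) h (z :: r) + \sum_(y <- Ua a x) \sum_(l <- DV r) h (y :: l).
  by rewrite -big_split; apply: eq_bigr => y _; rewrite DV_cons sum_cat 2!sum_map.
have E2 : \sum_(l <- DU a r) \sum_(m <- DV (x :: l)) h m =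
  \sum_(l <- DU a r) \sum_(z <- Vs x) h (z :: l) + \sum_(l <- DU a r) \sum_(m <- DV l) h (x :: m).
  by rewrite -big_split; apply: eq_bigr => y _; rewrite DV_cons sum_cat 2!sum_map.
have E3 : \sum_(w <- Vs x) \sum_(m <- DU a (w :: r)) h m =
  \sum_(w <- Vs x) \sum_(y <- Ua a w) h (y :: r) + \sum_(w <- Vs x) \sum_(l <- DU a r) h (w :: l).
  by rewrite -big_split; apply: eq_bigr => y _; rewrite DU_cons sum_cat 2!sum_map.
have E4 : \sum_(l <- DV r) \sum_(m <- DU a (x :: l)) h m =
  \sum_(l <- DV r) \sum_(y <- Ua a x) h (y :: l) + \sum_(l <- DV r) \sum_(m <- DU a l) h (x :: m).
  by rewrite -big_split; apply: eq_bigr => y _; rewrite DU_cons sum_cat 2!sum_map.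
rewrite DU_cons DV_cons !sum_cat (sum_map (cons^~ r)) (sum_map (cons x)) (sum_map (cons^~ r)) (sum_map (cons x)) E1 E2 E3 E4.
have Hx' := Hx (fun z => h (z :: r)); have Hr' := IH Hr (fun m => h (x :: m)).
rewrite /= in Hx' Hr'; rewrite Hx' Hr'.
have X1 : \sum_(y <- Ua a x) \sum_(l <- DV r) h (y :: l) = \sum_(l <- DV r) \sum_(y <- Ua a x) h (y :: l).
  exact: exchange_big.
have X2 : \sum_(l <- DU a r) \sum_(z <- Vs x) h (z :: l) = \sum_(z <- Vs x) \sum_(l <- DU a r) h (z :: l).
  exact: exchange_big.
rewrite X1 X2 /= mulrnDr.

ring.
Qed.

Lemma L1 a : (0 < ar a)%N -> forall x, P1 a x.
Proof.
move=> ha; elim/tree_ind2 => [|b [|s ss] IHs] h.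
- rewrite /Ua /= sum_seq1 (Vs_corolla ha) sum_seq1 Vs_leaf big_nil add0r.
  by rewrite mulr1n.
- by rewrite Ua_node Vs_node0 DU_nil !big_nil add0r mulr0n.
case: IHs => Hs Hss.
rewrite Ua_node DU_cons map_cat sum_cat 2!(sum_map (Node b)) (sum_map (cons^~ ss)) (sum_map (cons s)).
have E2 : \sum_(l <- DU a ss) \sum_(z <- Vs (Node b (s :: l))) h z =
    \sum_(l <- DU a ss) \sum_(m <- DV l) h (Node b (s :: m)).
  apply: (eq_big_all (DU_nonleaf a ss)) => l /negbTE hl.
  by rewrite Vs_node hl sum_map.
have Hss' := L2 Hss (fun m => h (Node b (s :: m))); rewrite /= in Hss'.
rewrite E2 Hss' [nf _]/=.
case: (boolP (all (@isLeaf G) ss)) => hl.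
  rewrite DV_leaves // big_nil add0r Vs_node hl sum_seq1; congr (_ + _).
  apply: eq_bigr => y _.
  by rewrite Vs_node hl sum_seq1.
rewrite Vs_node (negbTE hl) (sum_map (fun l => Node b (s :: l))) addrA; congr (_ + _).
have -> : \sum_(y <- Ua a s) \sum_(z <- Vs (Node b (y :: ss))) h z =
   \sum_(y <- Ua a s) \sum_(m <- DV ss) h (Node b (y :: m)).
  by apply: eq_bigr => y _; rewrite Vs_node (negbTE hl) (sum_map (fun l => Node b (y :: l))).
have X : \sum_(y <- Ua a s) \sum_(m <- DV ss) h (Node b (y :: m)) = \sum_(m <- DV ss) \sum_(y <- Ua a s) h (Node b (y :: m)).
  exact: exchange_big.
rewrite X -big_split; apply: eq_bigr => l _.
by rewrite Ua_node DU_cons map_cat sum_cat 2!(sum_map (Node b)) (sum_map (cons^~ l)) (sum_map (cons s)).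
Qed.

Definition ev (T : Type) (h : T -> K) (v : seq (K * T)) := \sum_(p <- v) p.1 * h p.2.

Lemma coef_ev (v : vec G K) t : coef v t = ev (fun u => if tree_eq u t then 1 else 0) v.
Proof.
rewrite /coef /ev big_mkcond; apply: eq_bigr => p _.
by case: ifP; rewrite ?mulr1 ?mulr0.
Qed.

Lemma ev_lin (f : tree G -> vec G K) h (v : vec G K) :
  ev h (lin f v) = \sum_(p <- v) p.1 * ev h (f p.2).
Proof.
rewrite /ev /lin big_flatten sum_map; apply: eq_bigr => p _.
rewrite sum_map mulr_sumr; apply: eq_bigr => q _ /=; by rewrite mulrA.
Qed.

Lemma ev_ones (T : Type) h (s : seq T) : ev h (map (pair 1) s) = \sum_(y <- s) h y.
Proof. by rewrite /ev sum_map; apply: eq_bigr => y _ /=; rewrite mul1r. Qed.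

Lemma ev_U h t : ev h (U ar K t) = \sum_(a <- enum G) \sum_(y <- Ua a t) h y.
Proof.
rewrite /ev /U big_flatten sum_map; apply: eq_bigr => a _.
by rewrite /Ua !sum_map; apply: eq_bigr => i _ /=; rewrite mul1r.
Qed.

Lemma ev_Vstar h t : ev h (Vstar K t) = \sum_(y <- Vs t) h y.
Proof. by rewrite Vstar_Vs ev_ones. Qed.

Lemma sum_const_seq (T : Type) (s : seq T) (c : K) : \sum_(y <- s) c = c *+ size s.
Proof. by elim: s => [|y s IH]; rewrite ?big_nil ?mulr0n // big_cons IH mulrS. Qed.

Lemma main_tree (har : forall a : G, (0 < ar a)%N) (ind : tree G -> K) x :
  ev (fun y => ev ind (Vstar K y)) (U ar K x) =
  ev (fun y => ev ind (U ar K y)) (Vstar K x) + ev ind (phi K x).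
Proof.
rewrite ev_U ev_Vstar.
have -> : \sum_(a <- enum G) \sum_(y <- Ua a x) ev ind (Vstar K y) =
   \sum_(a <- enum G) (\sum_(y <- Vs x) \sum_(z <- Ua a y) ind z + ind x *+ nf x).
  apply: eq_bigr => a _; rewrite -(L1 (har a) x ind); apply: eq_bigr => y _.
  exact: ev_Vstar.
rewrite big_split /= sum_const_seq -cardE; congr (_ + _).
  rewrite exchange_big /=; apply: eq_bigr => y _; by rewrite ev_U.
by rewrite /ev /phi big_seq1 /= mulr_natl -mulrnA mulnC.
Qed.

End Aux.

Theorem theorem2p7 (G : finType) (ar : G -> nat) (K : fieldType) :
  (forall a : G, (0 < ar a)%N) ->
  forall v : vec G K, all (wf ar) (map snd v) ->
  forall t : tree G,
    coef (lin (@Vstar G K) (lin (@U G ar K) v)) t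
    - coef (lin (@U G ar K) (lin (@Vstar G K) v)) t
    = coef (lin (@phi G K) v) t.
Proof.
move=> har v _ t.
rewrite !coef_ev !ev_lin.
set ind := (fun u : tree G => if tree_eq u t then 1 else 0 : K).
have E : forall (f1 f2 : tree G -> vec G K) w,
    \sum_(q <- lin f1 w) q.1 * ev ind (f2 q.2) =
    \sum_(p <- w) p.1 * ev (fun y => ev ind (f2 y)) (f1 p.2).
  by move=> f1 f2 w; exact: (ev_lin f1 (fun y => ev ind (f2 y)) w).
rewrite !E.
have -> : \sum_(p <- v) p.1 * ev (fun y => ev ind (Vstar K y)) (U ar K p.2) =
  \sum_(p <- v) p.1 * ev (fun y => ev ind (U ar K y)) (Vstar K p.2) +
  \sum_(p <- v) p.1 * ev ind (phi K p.2).
  by rewrite -big_split; apply: eq_bigr => p _; rewrite (main_tree har) mulrDr.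
by rewrite addrC addKr.
Qed.
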